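(* Let $n=2k+1$ with $k\ge 1$. If $S$ is a strong resolving set of $S_n$, then $|S|\ge n$.
   Context: For $n\ge 3$, $S_n$ is the graph with vertex set $\{a_i,b_i,c_i,d_i : 1\le i\le n\}$ and edge set $\{a_ia_{i+1}, b_ib_{i+1}, c_ic_{i+1}, d_id_{i+1}, a_{i+1}b_i, a_ib_i, b_ic_i, c_id_i : 1\le i\le n\}$, indices taken modulo $n$. $d$ is the graph distance. A vertex $w$ strongly resolves distinct vertices $u,v$ if $d(v,w)=d(v,u)+d(u,w)$ or $d(u,w)=d(u,v)+d(v,w)$. A set $S$ is a strong resolving set if every two distinct vertices are strongly resolved by some vertex of $S$. *)

(* Defs.v *)
From mathcomp Require Import all_boot.
Set Implicit Arguments. Unset Strict Implicit. Unset Printing Implicit Defensive.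

Section Dist.
Variable T : finType.
Variable e : rel T.

Fixpoint reach (m : nat) (u : T) : {set T} :=
  match m with
  | 0 => [set u]
  | m'.+1 => reach m' u :|: [set y | [exists x in reach m' u, e x y]]
  end.

(* d(u,v) = least m with v reachable from u in m steps
   (defaults to #|T| if unreachable; S_n is connected). *)
Definition gdist (u v : T) : nat := find (fun m => v \in reach m u) (iota 0 #|T|).

Definition strongly_resolves (w u v : T) : Prop :=
  gdist v w = gdist v u + gdist u w \/ gdist u w = gdist u v + gdist v w.

Definition strong_resolving_set (S : {set T}) : Prop :=
  forall u v : T, u != v -> exists2 w, w \in S & strongly_resolves w u v.
End Dist.

(* The graph S_n: vertex (l, i) with layer l = 0,1,2,3 for a,b,c,d. *)
Definition Sn_vertex (n : nat) := ('I_4 * 'I_n)%type.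

Definition Sn_arc (n : nat) (x y : Sn_vertex n) : bool :=
  let l := val x.1 in let i := val x.2 in
  let l' := val y.1 in let j := val y.2 in
  [|| (l == l') && (j == i.+1 %% n)
    , (l == 1) && (l' == 0) && (j == i.+1 %% n)
    , (l == 0) && (l' == 1) && (j == i)
    , (l == 1) && (l' == 2) && (j == i)
    | (l == 2) && (l' == 3) && (j == i) ].

Definition Sn_adj (n : nat) : rel (Sn_vertex n) :=
  fun x y => Sn_arc x y || Sn_arc y x.

(* Main.v *)
Require Import Defs.
From mathcomp Require Import all_boot zify.
Set Implicit Arguments. Unset Strict Implicit. Unset Printing Implicit Defensive.

Section Gen.
Variables (T : finType) (e : rel T).

Lemma reach_refl m x : x \in reach e m x.
Proof. elim: m => [|m IH] /=; first by rewrite set11. by rewrite in_setU IH. Qed.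

Lemma reach_S m x y : y \in reach e m x -> y \in reach e m.+1 x.
Proof. by move=> H /=; rewrite in_setU H. Qed.

Lemma reach_mono m m' x y : m <= m' -> y \in reach e m x -> y \in reach e m' x.
Proof.
move=> /subnK <-; elim: (m' - m) => [|d IH] H.
  by rewrite add0n.
by rewrite addSn; apply: reach_S; apply: IH.
Qed.

Lemma reach_step m x y z : y \in reach e m x -> e y z -> z \in reach e m.+1 x.
Proof.
move=> Hy Hyz /=; rewrite in_setU; apply/orP; right.
by rewrite inE; apply/existsP; exists y; rewrite Hy Hyz.
Qed.

Lemma reach_trans a b x y z :
  y \in reach e a x -> z \in reach e b y -> z \in reach e (a + b) x.
Proof.
move=> Hy; elim: b z => [|b IH] z /=; first by rewrite addn0 inE => /eqP ->.
rewrite in_setU => /orP [/IH H|]; first by rewrite addnS reach_S.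
rewrite inE => /existsP [t /andP [Ht Htz]].
by rewrite addnS; apply: reach_step (IH _ Ht) Htz.
Qed.

Lemma reach_first m x y : y \in reach e m.+1 x ->
  y = x \/ exists z, e x z /\ y \in reach e m z.
Proof.
elim: m y => [|m IH] y.
  rewrite /= in_setU inE => /orP [/eqP -> | ]; first by left.
  rewrite inE => /existsP [t /andP [Ht Hty]]; right; exists y.
  by move: Ht; rewrite inE => /eqP <-; rewrite Hty set11.
rewrite [reach e m.+2 x]/= in_setU => /orP [/IH [->|[z [Hz Hy]]]|].
- by left.
- by right; exists z; split => //; apply: reach_S.
rewrite inE => /existsP [t /andP [Ht Hty]].
case: (IH _ Ht) => [Etx|[z [Hz Hy]]].
  right; exists y; split; last exact: reach_refl.
  by rewrite -Etx.
by right; exists z; split => //; apply: reach_step Hy Hty.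
Qed.

Lemma reach_lip (phi : T -> nat) :
  (forall x y, e x y -> phi y <= (phi x).+1) ->
  forall m x y, y \in reach e m x -> phi y <= phi x + m.
Proof.
move=> Hl; elim=> [|m IH] x y /=; first by rewrite inE addn0 => /eqP ->.
rewrite in_setU => /orP [/IH H|]; first by rewrite addnS ltnW // ltnS.
rewrite inE => /existsP [t /andP [Ht Hty]].
have := IH _ _ Ht; have := Hl _ _ Hty; lia.
Qed.

Lemma gdist_le m x y : y \in reach e m x -> gdist e x y <= m.
Proof.
move=> H; rewrite /gdist; case: (ltnP m #|T|) => Hm.
  rewrite leqNgt; apply/negP => Hlt.
  have := before_find 0 Hlt; rewrite nth_iota // add0n H //.
apply: leq_trans (find_size _ _) _; by rewrite size_iota.
Qed.

Lemma gdist_max x y : gdist e x y <= #|T|.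
Proof. by rewrite /gdist; apply: leq_trans (find_size _ _) _; rewrite size_iota. Qed.

Lemma gdist_reach x y : gdist e x y < #|T| -> y \in reach e (gdist e x y) x.
Proof.
move=> H.
have Hh : has (fun m => y \in reach e m x) (iota 0 #|T|).
  by rewrite has_find size_iota.
have := nth_find 0 Hh; rewrite nth_iota // add0n.
Qed.

Lemma card_pos (x : T) : 0 < #|T|.
Proof. by apply/card_gt0P; exists x. Qed.

Lemma gdist0 x y : gdist e x y = 0 -> y = x.
Proof.
move=> H; have := gdist_reach (x:=x) (y:=y); rewrite H (card_pos x).
by move=> /(_ isT); rewrite inE => /eqP.
Qed.

Lemma gdist_lip (phi : T -> nat) :
  (forall x y, e x y -> phi y <= (phi x).+1) ->
  forall x y, phi y <= phi x + gdist e x y \/ #|T| <= gdist e x y.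
Proof.
move=> Hl x y; case: (ltnP (gdist e x y) #|T|) => H; last by right.
by left; apply: reach_lip (gdist_reach H).
Qed.

Lemma mmd u v w : u != v ->
  (forall x, e u x -> gdist e v x <= gdist e v u) ->
  gdist e v w = gdist e v u + gdist e u w -> w = u.
Proof.
move=> Huv Hn Heq; apply/eqP/negPn/negP => Hwu.
have Hm := gdist_max v w.
case: (ltnP (gdist e u w) #|T|) => Hd; last first.
  have : gdist e v u = 0 by lia.
  by move/gdist0 => Evu; rewrite Evu eqxx in Huv.
have Hr := gdist_reach Hd.
move: Hr Hwu Heq; case E: (gdist e u w) => [|d].
  by rewrite /= inE => ->.
move=> /reach_first [->|[z [Hz Hw]]]; first by rewrite eqxx.
move=> _ Heq.
have Hzu := Hn _ Hz.
have Hvu : gdist e v u < #|T| by lia.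
have Hzr : z \in reach e (gdist e v z) v by apply: gdist_reach; lia.
have := gdist_le (reach_trans Hzr Hw); lia.
Qed.
End Gen.

Section Conc.
Variable k : nat.
Hypothesis hk : 0 < k.
Local Notation n := k.*2.+1.
Local Notation V := (Sn_vertex n).
Local Notation e := (@Sn_adj n).

Lemma modS1 a : (a %% n).+1 %% n = a.+1 %% n.
Proof. by rewrite -(add1n (a %% n)) -(add1n a) modnDmr. Qed.

Lemma succ_cases t : t < n -> (t.+1 < n /\ t.+1 %% n = t.+1) \/ (t.+1 = n /\ t.+1 %% n = 0).
Proof.
move=> H; case: (ltnP t.+1 n) => h; first by left; rewrite modn_small.
right; have E : t.+1 = n by apply/eqP; rewrite eqn_leq h H.
by rewrite E modnn.
Qed.

Variable i : nat.
Hypothesis Hi : i < n.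

Definition off (j : nat) := (j + (n - i)) %% n.
Definition P (l t : nat) : V := (inord l, inord ((i + t) %% n)).
Definition L (x : V) := val x.1.
Definition O (x : V) := off (val x.2).

Lemma off_lt j : off j < n. Proof. by rewrite ltn_pmod. Qed.

Lemma valP2 t : val (P 0 t).2 = (i + t) %% n.
Proof. by rewrite /= inordK // ltn_pmod. Qed.

Lemma Pof (x : V) : x = P (L x) (O x).
Proof.
case: x => l j; rewrite /P /L /O /off /=; congr pair.
  by rewrite inord_val.
apply: val_inj; rewrite /= inordK ?ltn_pmod // modnDmr.
have -> : i + (j + (n - i)) = j + n by lia.
by rewrite modnDr modn_small.
Qed.

Lemma P_n l t : P l (t + n) = P l t.
Proof. by rewrite /P addnA modnDr. Qed.

Lemma LP l t : l < 4 -> L (P l t) = l.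
Proof. by move=> h; rewrite /L /= inordK. Qed.

Lemma OP l t : t < n -> O (P l t) = t.
Proof.
move=> h; rewrite /O /off /= inordK ?ltn_pmod // modnDml.
have -> : i + t + (n - i) = t + n by lia.
by rewrite modnDr modn_small.
Qed.

Lemma eqS_off (a b : nat) : a < n -> b < n -> (b == a.+1 %% n) = (off b == (off a).+1 %% n).
Proof.
move=> ha hb; rewrite /off modS1 -addSn eqn_modDr -{1}(modn_small hb).
by [].
Qed.

Lemma eq_off (a b : nat) : a < n -> b < n -> (b == a) = (off b == off a).
Proof.
move=> ha hb; rewrite /off eqn_modDr (modn_small ha) (modn_small hb) //.
Qed.

Definition arcN l t l' t' :=
  [|| (l == l') && (t' == t.+1 %% n)
    , (l == 1) && (l' == 0) && (t' == t.+1 %% n)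
    , (l == 0) && (l' == 1) && (t' == t)
    , (l == 1) && (l' == 2) && (t' == t)
    | (l == 2) && (l' == 3) && (t' == t) ].

Lemma arcE x y : Sn_arc x y = arcN (L x) (O x) (L y) (O y).
Proof.
rewrite /Sn_arc /arcN /L /O.
rewrite -!eqS_off ?ltn_ord // -!eq_off ?ltn_ord //.
Qed.

Lemma adjE x y : e x y = arcN (L x) (O x) (L y) (O y) || arcN (L y) (O y) (L x) (O x).
Proof. by rewrite /Sn_adj !arcE. Qed.


Definition ph (l t : nat) : nat :=
  match l with 0 => 3 + minn (t - 1) (n - t) | l'.+1 => (2 - l') + minn t (n - t) end.

Lemma ph_lip l t l' t' : l < 4 -> l' < 4 -> t < n -> t' < n -> arcN l t l' t' ->
  ph l' t' <= (ph l t).+1 /\ ph l t <= (ph l' t').+1.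
Proof.
move=> hl hl' ht ht'; rewrite /arcN; have := succ_cases ht.
move: (t.+1 %% n) => s Hs H.
case: l hl H => [|l] hl H; case: l' hl' H => [|l'] hl' H /=; lia.
Qed.

Definition phi (x : V) := ph (L x) (O x).

Lemma L_lt x : L x < 4. Proof. exact: ltn_ord. Qed.
Lemma O_lt x : O x < n. Proof. exact: off_lt. Qed.

Lemma phi_lip x y : e x y -> phi y <= (phi x).+1 /\ phi x <= (phi y).+1.
Proof.
rewrite adjE /phi => /orP [H|H].
  exact: ph_lip (L_lt _) (L_lt _) (O_lt _) (O_lt _) H.
have [] := ph_lip (L_lt _) (L_lt _) (O_lt _) (O_lt _) H; by split.
Qed.

Lemma cardV : #|{: 'I_4 * 'I_n}| = 4 * n.
Proof. by rewrite card_prod !card_ord. Qed.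

Definition vd := P 3 0.
Definition ua := P 0 (k + 1).

Lemma phi_vd : phi vd = 0.
Proof. by rewrite /phi /vd LP // OP //. Qed.

Lemma phi_ua : phi ua = k + 3.
Proof. rewrite /phi /ua LP // OP /=; lia. Qed.

Lemma lb_vu : k + 3 <= gdist e vd ua.
Proof.
have [] := gdist_lip (phi := phi) (fun x y h => proj1 (phi_lip h)) vd ua.
  by rewrite phi_vd phi_ua.
rewrite cardV => H; apply: leq_trans _ H; lia.
Qed.

Lemma psi_lip x y : e x y -> k + 3 - phi y <= (k + 3 - phi x).+1.
Proof. by move=> /phi_lip [_ H]; lia. Qed.

Lemma lb_uv : k + 3 <= gdist e ua vd.
Proof.
have [] := gdist_lip (phi := fun x => k + 3 - phi x) psi_lip ua vd.
  by rewrite phi_vd phi_ua; lia.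
rewrite cardV => H; apply: leq_trans _ H; lia.
Qed.

Lemma OP' l t : O (P l t) = t %% n.
Proof.
rewrite /O /off /= inordK ?ltn_pmod // modnDml.
have -> : i + t + (n - i) = t + n by lia.
by rewrite modnDr.
Qed.

Lemma e_h l t : l < 4 -> e (P l t) (P l t.+1).
Proof.
move=> hl; rewrite adjE !LP // !OP' /arcN modS1 !eqxx //.
Qed.

Lemma adj_sym x y : e x y = e y x.
Proof. by rewrite /Sn_adj orbC. Qed.

Lemma e_32 t : e (P 3 t) (P 2 t).
Proof. by rewrite adjE !LP // !OP' /arcN !eqxx !orbT. Qed.
Lemma e_21 t : e (P 2 t) (P 1 t).
Proof. by rewrite adjE !LP // !OP' /arcN !eqxx !orbT. Qed.
Lemma e_10 t : e (P 1 t) (P 0 t).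
Proof. by rewrite adjE !LP // !OP' /arcN !eqxx !orbT. Qed.
Lemma e_10' t : e (P 1 t) (P 0 t.+1).
Proof. by rewrite adjE !LP // !OP' /arcN modS1 !eqxx !orbT. Qed.

Lemma walk_f l t m : l < 4 -> P l (t + m) \in reach e m (P l t).
Proof.
move=> hl; elim: m => [|m IH]; first by rewrite addn0 reach_refl.
by rewrite addnS; apply: reach_step IH (e_h _ _).
Qed.

Lemma walk_b l t m : l < 4 -> P l t \in reach e m (P l (t + m)).
Proof.
move=> hl; elim: m t => [|m IH] t; first by rewrite addn0 reach_refl.
rewrite addnS -addSn -[m.+1]addn1; apply: (reach_trans (IH t.+1)).
apply: reach_step (reach_refl _ _ _) _; rewrite adj_sym; exact: e_h.
Qed.


Lemma gd_ub x y m : y \in reach e m x -> m <= k + 3 -> gdist e x y <= k + 3.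
Proof. by move=> H hm; apply: leq_trans (gdist_le H) hm. Qed.

Lemma r1 x y : e x y -> y \in reach e 1 x.
Proof. by move=> H; apply: reach_step (reach_refl _ _ _) H. Qed.

Lemma vd_P10 : P 1 0 \in reach e 2 vd.
Proof. exact: reach_step (r1 (e_32 0)) (e_21 0). Qed.

Lemma ua_P2 : P 2 (k + 1) \in reach e 2 ua.
Proof.
have h1 : e ua (P 1 (k + 1)) by rewrite adj_sym e_10.
have h2 : e (P 1 (k + 1)) (P 2 (k + 1)) by rewrite adj_sym e_21.
exact: reach_step (r1 h1) h2.
Qed.

Lemma e_23 t : e (P 2 t) (P 3 t). Proof. by rewrite adj_sym e_32. Qed.

Lemma ub1 : gdist e vd (P 0 (k + 2)) <= k + 3.
Proof.
have h0 : P 3 (k.+1 + k) = vd by rewrite /vd -(P_n 3 0); congr P; lia.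
have := walk_b k.+1 k (l:=3) isT; rewrite h0 => r.
have := reach_step (reach_step (reach_step r (e_32 _)) (e_21 _)) (e_10' _).
have -> : k + 2 = k.+2 by lia.
move/gd_ub; apply; lia.
Qed.

Lemma ub2 : gdist e vd (P 0 k) <= k + 3.
Proof.
have := reach_step (reach_trans vd_P10 (walk_f 0 (k - 1) (l:=1) isT)) (e_10' _).
have -> : (0 + (k - 1)).+1 = k by lia.
move/gd_ub; apply; lia.
Qed.

Lemma ub3 : gdist e vd (P 1 (k + 1)) <= k + 3.
Proof.
have := reach_trans vd_P10 (walk_f 0 (k + 1) (l:=1) isT).
rewrite add0n; move/gd_ub; apply; lia.
Qed.

Lemma ub4 : gdist e vd (P 1 k) <= k + 3.
Proof.
have := reach_trans vd_P10 (walk_f 0 k (l:=1) isT).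
rewrite add0n; move/gd_ub; apply; lia.
Qed.

Lemma ub5 : gdist e ua (P 2 0) <= k + 3.
Proof.
have := reach_trans ua_P2 (walk_f (k + 1) k (l:=2) isT).
have -> : P 2 (k + 1 + k) = P 2 0 by rewrite -(P_n 2 0); congr P; lia.
move/gd_ub; apply; lia.
Qed.

Lemma ub6 : gdist e ua (P 3 k.*2) <= k + 3.
Proof.
have := reach_trans (reach_step ua_P2 (e_23 _)) (walk_f (k + 1) (k - 1) (l:=3) isT).
have -> : P 3 (k + 1 + (k - 1)) = P 3 k.*2 by congr P; lia.
move/gd_ub; apply; lia.
Qed.

Lemma ub7 : gdist e ua (P 3 1) <= k + 3.
Proof.
have := walk_b 1 k (l:=3) isT.
have -> : 1 + k = k + 1 by lia.
move/(reach_trans (reach_step ua_P2 (e_23 _))).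
move/gd_ub; apply; lia.
Qed.


Lemma P_mod l t : P l (t %% n) = P l t.
Proof. by rewrite /P modnDmr. Qed.

Lemma nbr_ua y : e ua y ->
  [\/ y = P 0 (k + 2), y = P 0 k, y = P 1 (k + 1) | y = P 1 k].
Proof.
have hk1 : k + 1 < n by lia.
rewrite adjE /ua LP // OP // /arcN => H; rewrite (Pof y).
move: H (L_lt y) (O_lt y); move: (L y) (O y) => l t H hl ht.
have h1 := succ_cases ht; have h2 := succ_cases hk1.
have -> : k + 2 = (k + 1).+1 by lia.
rewrite -(P_mod 0 (k + 1).+1).
move: (t.+1 %% n) ((k + 1).+1 %% n) h1 h2 H => s1 s2 h1 h2 H.
have : [|| (l == 0) && (t == s2), (l == 0) && (t == k), (l == 1) && (t == k + 1)
   | (l == 1) && (t == k)] by lia.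
by case/or4P => /andP [/eqP -> /eqP ->]; [apply: Or41|apply: Or42|apply: Or43|apply: Or44].
Qed.

Lemma nbr_vd y : e vd y -> [\/ y = P 3 1, y = P 3 k.*2 | y = P 2 0].
Proof.
have hk1 : 0 < n by lia.
rewrite adjE /vd LP // OP // /arcN => H; rewrite (Pof y).
move: H (L_lt y) (O_lt y); move: (L y) (O y) => l t H hl ht.
have h1 := succ_cases ht; have h2 := succ_cases hk1.
move: (t.+1 %% n) (0.+1 %% n) h1 h2 H => s1 s2 h1 h2 H.
have : [|| (l == 3) && (t == 1), (l == 3) && (t == k.*2) | (l == 2) && (t == 0)] by lia.
by case/or3P => /andP [/eqP -> /eqP ->]; [apply: Or31|apply: Or32|apply: Or33].
Qed.

Lemma ua_vd : ua != vd.
Proof. by apply/negP => /eqP /(congr1 L); rewrite !LP. Qed.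

Lemma key (S : {set V}) : strong_resolving_set e S -> vd \in S \/ ua \in S.
Proof.
move=> HS; have [w Hw [H|H]] := HS _ _ ua_vd.
- right; suff <- : w = ua by [].
  apply: (mmd ua_vd) H => x /nbr_ua Hx; apply: leq_trans lb_vu.
  by case: Hx => ->; [exact: ub1|exact: ub2|exact: ub3|exact: ub4].
- left; suff <- : w = vd by [].
  have nv : vd != ua by rewrite eq_sym ua_vd.
  apply: (mmd nv) H => x /nbr_vd Hx; apply: leq_trans lb_uv.
  by case: Hx => ->; [exact: ub7|exact: ub6|exact: ub5].
Qed.

End Conc.

Theorem lemma3p9 (k : nat) (hk : 1 <= k) (S : {set Sn_vertex k.*2.+1}) :
  strong_resolving_set (@Sn_adj k.*2.+1) S -> k.*2.+1 <= #|S|.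
Proof.
move=> HS.
pose f := fun j : 'I_k.*2.+1 => if vd k j \in S then vd k j else ua k j.
have Hv2 j : j < k.*2.+1 -> val (vd k j).2 = j.
  by move=> hj; rewrite /vd /P /= inordK ?ltn_pmod // addn0 modn_small.
have Hu2 j : val (ua k j).2 = (j + (k + 1)) %% k.*2.+1.
  by rewrite /ua /P /= inordK ?ltn_pmod.
have Hv1 j : val (vd k j).1 = 3 by rewrite /vd /P /= inordK.
have Hu1 j : val (ua k j).1 = 0 by rewrite /ua /P /= inordK.
have finj : injective f.
  move=> a b; rewrite /f.
  case: ifP => _; case: ifP => _ E.
  - have H : val (vd k a).2 = val (vd k b).2 := congr1 (fun x => val x.2) E.
    by apply: val_inj; rewrite !Hv2 ?ltn_ord in H.
  - have H : val (vd k a).1 = val (ua k b).1 := congr1 (fun x => val x.1) E.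
    by rewrite Hv1 Hu1 in H.
  - have H : val (ua k a).1 = val (vd k b).1 := congr1 (fun x => val x.1) E.
    by rewrite Hv1 Hu1 in H.
  - have H : val (ua k a).2 = val (ua k b).2 := congr1 (fun x => val x.2) E.
    apply: val_inj; move: H; rewrite !Hu2 => /eqP.
    by rewrite eqn_modDr !modn_small ?ltn_ord // => /eqP.
have Hsub : [set f j | j : 'I_k.*2.+1] \subset S.
  apply/subsetP => y /imsetP [j _ ->]; rewrite /f.
  case: ifP => // Hn; have := key hk (ltn_ord j) HS; by rewrite Hn => -[].
by have := subset_leq_card Hsub; rewrite card_imset // card_ord.
Qed.
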